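(* Let $U$ be the subalgebra of the $q$-shuffle algebra $(\mathbb V,\star)$ generated by $x$ and $y$. Then every alternating word of $\mathbb V$ is contained in $U$. Here a word $v_1v_2\cdots v_n$ is alternating if $n\ge 1$ and $v_{i-1}\ne v_i$ for $2\le i\le n$.
   Context: Let $\mathbb F$ be a field and let $q\in\mathbb F$ be nonzero and not a root of unity. Let $\mathbb V$ be the free associative $\mathbb F$-algebra on noncommuting generators $x,y$. Its words (products of letters $x,y$, including the empty word $1$) form a basis. Set $\langle x,x\rangle=\langle y,y\rangle=2$ and $\langle x,y\rangle=\langle y,x\rangle=-2$. The $q$-shuffle product $\star$ on $\mathbb V$ is the bilinear product determined as follows: - $1\star v=v\star 1=v$; - for nontrivial words $u=u_1\cdots u_r$ and $v=v_1\cdots v_s$ (letters $u_i,v_j$; juxtaposition is concatenation), $$u\star v=u_1\big((u_2\cdots u_r)\star v\big)+v_1\big(u\star (v_2\cdots v_s)\big)q^{\langle u_1,v_1\rangle+\cdots+\langle u_r,v_1\rangle}.$$ This makes $\mathbb V$ an associative algebra, the $q$-shuffle algebra. *)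

(* Defs.v *)
From HB Require Import structures.
From mathcomp Require Import all_boot all_order all_algebra.
Set Implicit Arguments. Unset Strict Implicit. Unset Printing Implicit Defensive.
Import Order.TTheory GRing.Theory Num.Theory.
Local Open Scope ring_scope.

Definition letter := bool.
Definition word := seq letter.
Definition lx : letter := true.
Definition ly : letter := false.

Section QShuffle.
Variables (F : fieldType) (q : F).

(* An element of V is represented by a formal linear combination of words,
   i.e. a finite list of (coefficient, word) pairs.  Its meaning is its
   coefficient function [ev]; two combinations denote the same element of V
   iff their coefficient functions agree. *)
Definition combo := seq (F * word).

Definition ev (c : combo) (w : word) : F :=
  \sum_(p <- c) (if p.2 == w then p.1 else 0).

Definition scal (k : F) (c : combo) : combo := [seq (k * p.1, p.2) | p <- c].
Definition pre (a : letter) (c : combo) : combo := [seq (p.1, a :: p.2) | p <- c].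
Definition wrd (w : word) : combo := [:: (1, w)].

Definition pair (a b : letter) : int := if a == b then 2 else - 2.

Fixpoint wsh (u : word) : word -> combo :=
  match u with
  | [::] => wrd
  | a :: u' =>
      fix shv (v : word) : combo :=
        match v with
        | [::] => wrd (a :: u')
        | b :: v' =>
            pre a (wsh u' v) ++
            scal (q ^ (\sum_(c <- a :: u') pair c b)) (pre b (shv v'))
        end
  end.

Definition star (c d : combo) : combo :=
  flatten [seq scal (p1.1 * p2.1) (wsh p1.2 p2.2) | p1 <- c, p2 <- d].

Inductive inU : combo -> Prop :=
| inU_one : inU (wrd [::])
| inU_x : inU (wrd [:: lx])
| inU_y : inU (wrd [:: ly])
| inU_add c d : inU c -> inU d -> inU (c ++ d)
| inU_scal k c : inU c -> inU (scal k c)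
| inU_star c d : inU c -> inU d -> inU (star c d)
| inU_eq c d : ev c =1 ev d -> inU c -> inU d.

End QShuffle.

Definition alternating (w : word) : Prop :=
  (0 < size w)%N /\
  forall i : nat, (0 < i)%N -> (i < size w)%N -> nth lx w i.-1 != nth lx w i.

(* Main.v *)
Require Import Defs.
From mathcomp Require Import all_boot all_order all_algebra.
From mathcomp Require Import ring zify.
Set Implicit Arguments. Unset Strict Implicit. Unset Printing Implicit Defensive.
Import Order.TTheory GRing.Theory Num.Theory.
Local Open Scope ring_scope.

Section Aux.
Variables (F : fieldType) (q : F).

Lemma ev_cat (c d : combo F) w : ev (c ++ d) w = ev c w + ev d w.
Proof. by rewrite /ev big_cat. Qed.

Lemma ev_nil w : ev ([::] : combo F) w = 0.
Proof. by rewrite /ev big_nil. Qed.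

Lemma ev_scal k (c : combo F) w : ev (scal k c) w = k * ev c w.
Proof.
rewrite /ev /scal big_map mulr_sumr; apply: eq_bigr => p _ /=.
by case: ifP; rewrite ?mulr0.
Qed.

Lemma ev_pre_cons a (c : combo F) b w : ev (pre a c) (b :: w) = (a == b)%:R * ev c w.
Proof.
rewrite /ev /pre big_map mulr_sumr; apply: eq_bigr => p _ /=.
rewrite eqseq_cons; case: (a == b); rewrite /= ?mul1r ?mul0r //.
Qed.

Lemma ev_pre_nil a (c : combo F) : ev (pre a c) [::] = 0.
Proof. by rewrite /ev /pre big_map big1. Qed.

Lemma ev_wrd u w : ev (wrd F u) w = (u == w)%:R.
Proof. by rewrite /ev /wrd big_seq1 /=; case: ifP. Qed.

Lemma ev_flatten (l : seq (combo F)) w : ev (flatten l) w = \sum_(c <- l) ev c w.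
Proof.
elim: l => [|c l IH]; first by rewrite big_nil ev_nil.
by rewrite /= ev_cat IH big_cons.
Qed.

Lemma ev_star_wrd u v w : ev (star q (wrd F u) (wrd F v)) w = ev (wsh q u v) w.
Proof. by rewrite /star /= ev_cat ev_nil addr0 ev_scal mulr1 mul1r. Qed.

Lemma wsh_nilr u : wsh q u [::] = wrd F u.
Proof. by case: u. Qed.

Definition E u v w := ev (wsh q u v) w.

Lemma E_nil u v : E u v [::] = ((u == [::]) && (v == [::]))%:R.
Proof.
rewrite /E; case: u => [|a u]; first by rewrite ev_wrd; case: v.
case: v => [|b v]; first by rewrite /= ev_wrd.
by rewrite /= ev_cat ev_scal !ev_pre_nil mulr0 addr0.
Qed.

Lemma E_cons u v c w :
  E u v (c :: w) =
  (if u is d :: u' then (d == c)%:R * E u' v w else 0) +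
  (if v is d :: v' then (d == c)%:R * q ^ (\sum_(e <- u) pair e c) * E u v' w else 0).
Proof.
rewrite /E; case: u => [|a u].
  case: v => [|b v]; first by rewrite /= ev_wrd add0r.
  rewrite /= !ev_wrd big_nil expr0z mulr1 add0r eqseq_cons.
  by case: (b == c); rewrite /= ?mul1r ?mul0r.
case: v => [|b v].
  rewrite /= !ev_wrd wsh_nilr ev_wrd addr0 eqseq_cons.
  by case: (a == c); rewrite /= ?mul1r ?mul0r.
rewrite /= ev_cat ev_scal !ev_pre_cons.
congr (_ + _).
by case: eqP => [->|_]; rewrite /= ?mul1r ?mul0r ?mulr0.
Qed.

Fixpoint alt (a : letter) (n : nat) : word :=
  if n is n'.+1 then a :: alt (~~ a) n' else [::].

Lemma alt2 a n : alt a n.+2 = a :: ~~ a :: alt a n.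
Proof. by rewrite /= negbK. Qed.

Lemma altD a k : alt a (k.+1).*2 = a :: ~~ a :: alt a k.*2.
Proof. by rewrite doubleS alt2. Qed.

Lemma pair_same a : pair a a = 2.
Proof. by rewrite /pair eqxx. Qed.
Lemma pair_neg a : pair a (~~ a) = -2.
Proof. by case: a. Qed.
Lemma pair_negl a : pair (~~ a) a = -2.
Proof. by case: a. Qed.
Lemma eq_neg a : (a == ~~ a) = false.
Proof. by case: a. Qed.
Lemma eq_negl a : (~~ a == a) = false.
Proof. by case: a. Qed.

Lemma sum_pair_even a b k : \sum_(e <- alt a k.*2) pair e b = 0.
Proof.
elim: k a => [|k IH] a; first by rewrite big_nil.
rewrite altD !big_cons IH addr0.
move: IH => _; by case: a; case: b.
Qed.

Lemma sum_pair_odd a b k : \sum_(e <- alt a k.*2.+1) pair e b = pair a b.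
Proof. by rewrite /= big_cons sum_pair_even addr0. Qed.

Lemma E_nilnil w : E [::] [::] w = ([::] == w)%:R.
Proof. by rewrite /E ev_wrd. Qed.
Lemma E_nill v w : E [::] v w = (v == w)%:R.
Proof. by rewrite /E ev_wrd. Qed.
Lemma E_nilr u w : E u [::] w = (u == w)%:R.
Proof. by rewrite /E wsh_nilr ev_wrd. Qed.

Lemma qm2 : q ^ (-2) = (q ^+ 2)^-1.
Proof. by []. Qed.

Hypothesis hq0 : q != 0.

Lemma odd_id a w :
  (forall k, E [:: a] (alt (~~ a) k.*2) w - q ^ (-2) * E (alt (~~ a) k.*2) [:: a] w
             = (1 - q ^ (-2)) * (alt a k.*2.+1 == w)%:R) /\
  (forall m, E [:: a] (alt a m.*2.+1) w = E (alt a m.*2.+1) [:: a] w).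
Proof.
elim: w => [|c w [IHA IHB]].
  split=> k; rewrite !E_nil /=; last by [].
  by rewrite andbF mulr0 subr0 mulr0.
have [->|hca] := eqVneq c a; last first.
  have {hca} -> : c = ~~ a by apply/eqP; move: hca; case: (a); case: (c).
  split.
    case=> [|k].
      by rewrite /= !E_cons /= !eq_neg !mul0r !add0r eqseq_cons eq_neg /= !mulr0 oppr0.
    rewrite altD !E_cons !negbK eq_neg eqxx !mul0r !mul1r big_seq1 pair_neg.
    rewrite add0r addr0.
    change (a :: alt (~~ a) k.*2) with (alt a k.*2.+1).
    by rewrite IHB eqseq_cons eq_neg /= mulr0 subrr.
  move=> m; rewrite !E_cons /= !eq_neg !mul0r !add0r.
  by [].
split.
  case=> [|k].
    rewrite !E_cons eqxx !mul1r big_nil expr0z mul1r E_nilnil.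
    rewrite eqseq_cons eqxx /=; ring.
  rewrite [alt (~~ a) _]altD !E_cons -(altD (~~ a) k) eqxx eq_negl !mul1r !mul0r add0r addr0.
  rewrite sum_pair_even expr0z mul1r E_nill E_nilr.
  change (alt a k.+1.*2.+1) with (a :: alt (~~ a) k.+1.*2).
  rewrite eqseq_cons eqxx /=; ring.
move=> m.
change (alt a m.*2.+1) with (a :: alt (~~ a) m.*2).
rewrite !E_cons eqxx !mul1r big_seq1 big_cons sum_pair_even addr0 pair_same E_nill E_nilr.
have hA := IHA m.
have h2 : q ^ 2 = q ^+ 2 by [].
rewrite h2.
have hq2 : q ^+ 2 != 0 by rewrite expf_neq0.
have -> : E [:: a] (alt (~~ a) m.*2) w =
   q ^ (-2) * E (alt (~~ a) m.*2) [:: a] w + (1 - q ^ (-2)) * (alt a m.*2.+1 == w)%:R.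
  by rewrite -hA; ring.
rewrite qm2.
change (alt a m.*2.+1) with (a :: alt (~~ a) m.*2).
set X := (_ == w)%:R; set Y := E _ [:: a] w.
field.
exact: hq0.
Qed.

Lemma Ea_L a i j w :
  E (alt (~~ a) i.*2) (alt a j.*2) (a :: w) =
  (0 < j)%:R * E (alt (~~ a) i.*2) (alt (~~ a) (j.-1).*2.+1) w.
Proof.
rewrite E_cons.
have -> : (if alt (~~ a) i.*2 is d :: u' then (d == a)%:R * E u' (alt a j.*2) w else 0) = 0.
  by case: i => [|i] //; rewrite altD eq_negl mul0r.
rewrite add0r.
case: j => [|j]; first by rewrite mul0r.
by rewrite altD eqxx sum_pair_even expr0z /= !mul1r negbK.
Qed.

Lemma Eb_L a i j w :
  E (alt (~~ a) i.*2) (alt a j.*2) (~~ a :: w) =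
  (0 < i)%:R * E (alt a (i.-1).*2.+1) (alt a j.*2) w.
Proof.
rewrite E_cons.
have -> : (if alt a j.*2 is d :: v' then (d == ~~ a)%:R * q ^ (\sum_(e <- alt (~~ a) i.*2) pair e (~~ a)) * E (alt (~~ a) i.*2) v' w else 0) = 0.
  by case: j => [|j] //; rewrite altD eq_neg !mul0r.
rewrite addr0.
case: i => [|i]; first by rewrite mul0r.
by rewrite altD eqxx /= negbK mul1r.
Qed.

Lemma Ea_R a i j w :
  E (alt a i.*2.+1) (alt (~~ a) j.*2.+1) (a :: w) =
  E (alt (~~ a) i.*2) (alt (~~ a) j.*2.+1) w.
Proof.
rewrite E_cons /= eqxx eq_negl mul1r !mul0r addr0.
by [].
Qed.

Lemma Eb_R a i j w :
  E (alt a i.*2.+1) (alt (~~ a) j.*2.+1) (~~ a :: w) =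
  q ^ (-2) * E (alt a i.*2.+1) (alt a j.*2) w.
Proof.
rewrite E_cons.
change (alt a i.*2.+1) with (a :: alt (~~ a) i.*2).
change (alt (~~ a) j.*2.+1) with (~~ a :: alt (~~ ~~ a) j.*2).
rewrite /= eq_neg eqxx mul0r add0r mul1r negbK.
by rewrite -/(alt a i.*2.+1) sum_pair_odd pair_neg.
Qed.

Lemma alt_eq0 a n : (alt a n == [::]) = (n == 0)%N.
Proof. by case: n. Qed.

Lemma even_id a m w :
  \sum_(i < m.+2) (q ^ (-2)) ^+ i * E (alt (~~ a) i.*2) (alt a (m.+1 - i).*2) w =
  \sum_(i < m.+1) (q ^ (-2)) ^+ i * E (alt a i.*2.+1) (alt (~~ a) (m - i).*2.+1) w.
Proof.
case: w => [|c w].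
  transitivity (0 : F).
    apply: big1 => i _; rewrite E_nil !alt_eq0.
    case: (nat_of_ord i) (ltn_ord i) => [|k] _; last by rewrite mulr0.
    by rewrite subn0 /= mulr0.
  by symmetry; apply: big1 => i _; rewrite E_nil /= mulr0.
have [->|hca] := eqVneq c a; last first.
  have {hca} -> : c = ~~ a by apply/eqP; move: hca; case: (a); case: (c).
  rewrite big_ord_recl Eb_L mul0r mulr0 add0r.
  apply: eq_bigr => i _.
  rewrite Eb_R Eb_L mul1r exprS.
  have -> : nat_of_ord (lift ord0 i) = i.+1 by [].
  rewrite subSS /=.
  by rewrite mulrA [(q ^ (-2)) ^+ i * _]mulrC.
rewrite big_ord_recr Ea_L /=.
rewrite subnn mul0r mulr0 addr0.
apply: eq_bigr => i _.
rewrite Ea_R Ea_L /=.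
have hi := ltn_ord i.
have -> : (0 < m.+1 - i)%N by rewrite subn_gt0.
have -> : ((m.+1 - i).-1 = m - i)%N by rewrite subSn.
by rewrite mul1r.
Qed.


Notation t := (q ^ (-2)).

Lemma inU_nil : inU q ([::] : combo F).
Proof.
apply: (@inU_eq _ _ (scal 0 (wrd F [::]))); last exact/inU_scal/inU_one.
by move=> w; rewrite ev_scal mul0r ev_nil.
Qed.

Lemma inU_flatten_map (f : nat -> combo F) s :
  (forall i, i \in s -> inU q (f i)) -> inU q (flatten [seq f i | i <- s]).
Proof.
elim: s => [|i s IH] H /=; first exact: inU_nil.
apply: inU_add; first by apply: H; rewrite inE eqxx.
by apply: IH => j hj; apply: H; rewrite inE hj orbT.
Qed.

Lemma inU_letter a : inU q (wrd F [:: a]).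
Proof. by case: a; [exact: inU_x | exact: inU_y]. Qed.

Lemma inU_starw u v : inU q (wrd F u) -> inU q (wrd F v) ->
  inU q (star q (wrd F u) (wrd F v)).
Proof. by move=> hu hv; apply: inU_star. Qed.

Definition Sc a m : combo F :=
  flatten [seq scal (t ^+ i) (star q (wrd F (alt a i.*2.+1)) (wrd F (alt (~~ a) (m - i).*2.+1)))
          | i <- iota 0 m.+1] ++
  flatten [seq scal (- t ^+ i.+1) (star q (wrd F (alt (~~ a) i.+1.*2)) (wrd F (alt a (m.+1 - i.+1).*2)))
          | i <- iota 0 m].

Lemma ev_Sc a m w :
  ev (Sc a m) w = (alt a m.+1.*2 == w)%:R + t ^+ m.+1 * (alt (~~ a) m.+1.*2 == w)%:R.
Proof.
have hE : \sum_(0 <= i < m.+2) (q ^ (-2)) ^+ i * E (alt (~~ a) i.*2) (alt a (m.+1 - i).*2) w =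
  \sum_(0 <= i < m.+1) (q ^ (-2)) ^+ i * E (alt a i.*2.+1) (alt (~~ a) (m - i).*2.+1) w.
  by rewrite !big_mkord; exact: even_id.
rewrite big_nat_recl // big_nat_recr // in hE.
rewrite /index_iota !subn0 in hE.
rewrite /Sc ev_cat !ev_flatten !big_map.
rewrite -/(index_iota 0 m.+1) -/(index_iota 0 m).
under eq_bigr => i _ do rewrite ev_scal ev_star_wrd.
under [X in _ + X = _]eq_bigr => i _ do rewrite ev_scal ev_star_wrd mulNr.
rewrite sumrN -hE.
rewrite -/(E _ _ _) addrA addrAC addrK subnn.
by rewrite expr0 mul1r E_nill E_nilr.
Qed.


Hypothesis hq : forall n : nat, (0 < n)%N -> q ^+ n != 1.

Lemma tpow_neq1 n : (0 < n)%N -> t ^+ n != 1.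
Proof.
move=> hn; rewrite qm2 exprVn -exprM invr_eq1; apply: hq.
by rewrite muln_gt0 hn.
Qed.

Lemma inU_Sc a m :
  (forall n, (n < m.+1.*2)%N -> forall b, inU q (wrd F (alt b n))) -> inU q (Sc a m).
Proof.
move=> IH; apply: inU_add; apply: inU_flatten_map => i; rewrite mem_iota add0n => /andP[_ hi];
  apply: inU_scal; apply: inU_starw; apply: IH; rewrite -!muln2; lia.
Qed.

Lemma all_alt n a : inU q (wrd F (alt a n)).
Proof.
elim/ltn_ind: n a => n IH a.
case: n IH => [|n] IH; first exact: inU_one.
have [he|ho] := boolP (odd n); last first.
  have hn : n = (n./2).*2 by rewrite even_halfK.
  move: IH; rewrite hn; set k := n./2 => IH.
  pose X := scal (1 - t)^-1 (star q (wrd F [:: a]) (wrd F (alt (~~ a) k.*2)) ++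
              scal (- t) (star q (wrd F (alt (~~ a) k.*2)) (wrd F [:: a]))).
  apply: (@inU_eq _ _ X); last first.
    apply/inU_scal/inU_add; last apply: inU_scal; apply: inU_starw;
      (try exact: inU_letter); apply: IH; exact: ltnSn.
  move=> w; rewrite /X ev_scal ev_cat ev_scal !ev_star_wrd ev_wrd mulNr.
  have [hA _] := odd_id a w.
  rewrite -/(E _ _ _) -/(E _ _ _) hA.
  have h1 : 1 - t != 0 by rewrite subr_eq0 eq_sym -(expr1 t) tpow_neq1.
  by rewrite mulrA mulVf // mul1r.
have hn : n.+1 = (n./2).+1.*2 by rewrite doubleS odd_halfK //= prednK // odd_gt0.
move: IH; rewrite hn; set m := n./2 => IH.
set T := t ^+ m.+1.
pose Y := scal (1 - T ^+ 2)^-1 (Sc a m ++ scal (- T) (Sc (~~ a) m)).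
apply: (@inU_eq _ _ Y); last first.
  by apply/inU_scal/inU_add; last apply: inU_scal; apply: inU_Sc.
move=> w; rewrite /Y ev_scal ev_cat ev_scal !ev_Sc negbK ev_wrd.
have h1 : 1 - T ^+ 2 != 0.
  by rewrite subr_eq0 eq_sym /T -exprM tpow_neq1 // muln_gt0.
set A := (_ == w)%:R; set B := (_ == w)%:R.
rewrite -/T; field.
exact: h1.
Qed.

End Aux.

Lemma alternating_alt (w : word) : alternating w -> w = alt (head lx w) (size w).
Proof.
case: w => [|a w] [] //= _ H.
elim: w a H => [|b w IH] a H //=.
have hab : a != b by apply: (H 1%N).
have hb : b = ~~ a by apply/eqP; move: hab; case: (a); case: (b).
subst b.
congr (_ :: _); rewrite -IH //.
move=> i hi1 hi2.
have := H i.+1 (ltn0Sn _) hi2.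
by case: i hi1 hi2.
Qed.

Theorem theorem8p3 (F : fieldType) (q : F) (hq0 : q != 0)
  (hq : forall n : nat, (0 < n)%N -> q ^+ n != 1)
  (w : word) (hw : alternating w) :
  inU q (wrd F w).
Proof.
rewrite (alternating_alt hw).
exact: all_alt.
Qed.
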